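(* For every $\beta\in\mathbb{C}$, the linear map $\mathrm{d}_{1-\beta,\beta}:\mathcal{W}\to\mathcal{F}_{1-\beta}\otimes\mathcal{F}_\beta$ defined by $$\mathrm{d}_{1-\beta,\beta}(L_n)=\begin{cases}\sum_{i=0}^{n-1}(i-n\beta)v_i\otimes v_{n-i},&n\geq1;\\ 0,&n=0;\\ -\sum_{i=n}^{-1}(i-n\beta)v_i\otimes v_{n-i},&n\leq -1\end{cases}$$ is a 1-cocycle which is not a 1-coboundary.
   Context: The Witt algebra $\mathcal{W}$ has basis $\{L_n\mid n\in\mathbb{Z}\}$ and bracket $[L_m,L_n]=(m-n)L_{m+n}$. $\mathcal{F}_\alpha$ has basis $\{v_n\}$ with $L_m\cdot v_n=-(\alpha m+n)v_{m+n}$; $\mathcal{F}_\alpha\otimes\mathcal{F}_\beta$ is a $\mathcal{W}$-module via $L_m\cdot(v_i\otimes v_j)=-(i+\alpha m)v_{m+i}\otimes v_j-(j+\beta m)v_i\otimes v_{m+j}$. A 1-cocycle is a linear map $d$ with $d([x,y])=x\cdot d(y)-y\cdot d(x)$; a 1-coboundary is a map $x\mapsto x\cdot v$ for a fixed $v$ in the module. *)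

(* Defs.v *)
From HB Require Import structures.
From mathcomp Require Import all_boot all_order all_algebra.
From mathcomp Require Import complex.
From mathcomp Require Import reals.
Set Implicit Arguments. Unset Strict Implicit. Unset Printing Implicit Defensive.
Import Order.TTheory GRing.Theory Num.Theory.
Local Open Scope ring_scope.

Section WittModules.
Variable K : comNzRingType.

(* An element of the Witt algebra W is a finite formal linear combination
   sum_k c_k L_{n_k}, represented by the list of pairs (n_k, c_k). *)
Definition Wvec := seq (int * K).
(* An element of F_alpha (x) F_beta is a finite formal linear combination
   sum_k c_k v_{i_k} (x) v_{j_k}, represented by the list ((i_k, j_k), c_k). *)
Definition Tvec := seq ((int * int) * K).

Definition coefW (x : Wvec) (n : int) : K := \sum_(p <- x | p.1 == n) p.2.
Definition coefT (u : Tvec) (ij : int * int) : K := \sum_(p <- u | p.1 == ij) p.2.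

Definition eqW (x y : Wvec) := forall n, coefW x n = coefW y n.
Definition eqT (u v : Tvec) := forall ij, coefT u ij = coefT v ij.

Definition addW (x y : Wvec) : Wvec := x ++ y.
Definition scaleW (c : K) (x : Wvec) : Wvec := [seq (p.1, c * p.2) | p <- x].
Definition addT (u v : Tvec) : Tvec := u ++ v.
Definition scaleT (c : K) (u : Tvec) : Tvec := [seq (p.1, c * p.2) | p <- u].
Definition subT (u v : Tvec) : Tvec := u ++ scaleT (-1) v.

Definition bracket (x y : Wvec) : Wvec :=
  [seq (p.1 + q.1, (p.1 - q.1)%:~R * p.2 * q.2) | p <- x, q <- y].

Definition act_basis (alpha beta : K) (m : int) (ij : int * int) : Tvec :=
  [:: ((m + ij.1, ij.2), - (ij.1%:~R + alpha * m%:~R));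
      ((ij.1, m + ij.2), - (ij.2%:~R + beta * m%:~R))].

Definition actT (alpha beta : K) (x : Wvec) (u : Tvec) : Tvec :=
  flatten [seq [seq (t.1, p.2 * q.2 * t.2) | t <- act_basis alpha beta p.1 q.1]
          | p <- x, q <- u].

Definition is_linear_map (d : Wvec -> Tvec) :=
  [/\ forall x y, eqW x y -> eqT (d x) (d y),
      forall x y, eqT (d (addW x y)) (addT (d x) (d y)) &
      forall c x, eqT (d (scaleW c x)) (scaleT c (d x))].

Definition is_cocycle (act : Wvec -> Tvec -> Tvec) (d : Wvec -> Tvec) :=
  is_linear_map d /\
  forall x y, eqT (d (bracket x y)) (subT (act x (d y)) (act y (d x))).

Definition is_coboundary (act : Wvec -> Tvec -> Tvec) (d : Wvec -> Tvec) :=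
  exists v : Tvec, forall x, eqT (d x) (act x v).

Definition zrange (a b : int) : seq int := [seq a + k%:Z | k <- iota 0 `|b - a|%N].

Definition d_basis (beta : K) (n : int) : Tvec :=
  if (1 <= n)%R then [seq ((i, n - i), i%:~R - n%:~R * beta) | i <- zrange 0 n]
  else if n == 0 then [::]
  else [seq ((i, n - i), - (i%:~R - n%:~R * beta)) | i <- zrange n 0].

Definition d_ext (beta : K) (x : Wvec) : Tvec :=
  flatten [seq scaleT p.2 (d_basis beta p.1) | p <- x].

End WittModules.

(* Main.v *)
Require Import Defs.
From HB Require Import structures.
From mathcomp Require Import all_boot all_order all_algebra.
From mathcomp Require Import complex reals.
From mathcomp Require Import zify ring.
Import GRing.Theory Num.Theory.
Local Open Scope ring_scope.
Set Implicit Arguments. Unset Strict Implicit.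

Section Gen.
Variable K : comNzRingType.

Definition H (x : int) : K := if (0 <= x) then 1 else 0.
Definition dc (beta : K) (n i : int) : K :=
  (i%:~R - n%:~R * beta) * (H i - H (i - n)).

Lemma coefT_cat (u v : Tvec K) ij : coefT (u ++ v) ij = coefT u ij + coefT v ij.
Proof. by rewrite /coefT big_cat. Qed.

Lemma coefT_scale c (u : Tvec K) ij : coefT (scaleT c u) ij = c * coefT u ij.
Proof. by rewrite /coefT /scaleT big_map /= mulr_sumr. Qed.

Lemma coefT_flatten (ss : seq (Tvec K)) ij :
  coefT (flatten ss) ij = \sum_(s <- ss) coefT s ij.
Proof. by rewrite /coefT big_flatten. Qed.

Lemma coefW_scale c (x : Wvec K) n : coefW (scaleW c x) n = c * coefW x n.
Proof. by rewrite /coefW /scaleW big_map /= mulr_sumr. Qed.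

Lemma zsum (a b i : int) (F : int -> K) : a <= b ->
  \sum_(k <- zrange a b) (if k == i then F k else 0) =
  if (a <= i) && (i < b) then F i else 0.
Proof.
move=> hab; rewrite /zrange big_map.
case: ifP => [/andP [h1 h2]|hn].
  pose k0 := `|i - a|%N.
  have hk0 : a + k0%:Z = i by rewrite /k0; lia.
  rewrite (bigD1_seq k0) /=; last exact: iota_uniq.
    rewrite hk0 eqxx big1 ?addr0 // => k hk.
    case: eqP => // e; exfalso; move/eqP: hk; apply; rewrite /k0; lia.
  rewrite mem_iota /k0; lia.
rewrite big_seq big1 // => k; rewrite mem_iota => hk.
case: eqP => // e; exfalso; move/negbT: hn; rewrite -e; lia.
Qed.

Lemma coefT_dbasis beta n i j :
  coefT (d_basis beta n) (i, j) = if n == i + j then dc beta n i else 0.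
Proof.
rewrite /d_basis /dc /H.
case: ifP => h1.
  rewrite /coefT big_map /= big_mkcond /=.
  case: eqP => hn.
    rewrite (eq_bigr (fun k => if k == i then k%:~R - n%:~R * beta else 0)).
      rewrite zsum; last lia.
      case: ifP => h2; [have -> : (0 <= i) = true by lia|].
        have -> : (0 <= i - n) = false by lia. by rewrite subr0 mulr1.
      have [h3|h3] := boolP (0 <= i).
        have -> : (0 <= i - n) = true by lia. by rewrite subrr mulr0.
      have -> : (0 <= i - n) = false by lia. by rewrite subrr mulr0.
    move=> k _; rewrite xpair_eqE; case: eqP => [->|hk] /=.
      by rewrite hn addrC addKr eqxx.
    by [].
  rewrite big1 // => k _; rewrite xpair_eqE; case: eqP => //= ->.
  case: eqP => // e; exfalso; apply: hn; lia.
case: ifP => h0.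
  rewrite /coefT big_nil; move/eqP: h0 => ->.
  by case: ifP => _ //; rewrite !subr0 subrr mulr0.
rewrite /coefT big_map /= big_mkcond /=.
case: eqP => hn.
  rewrite (eq_bigr (fun k => if k == i then - (k%:~R - n%:~R * beta) else 0)).
    rewrite zsum; last lia.
    case: ifP => h2.
      have -> : (0 <= i) = false by lia.
      have -> : (0 <= i - n) = true by lia. by rewrite sub0r mulrN1.
    have [h3|h3] := boolP (0 <= i).
      have -> : (0 <= i - n) = true by lia. by rewrite subrr mulr0.
    have -> : (0 <= i - n) = false by lia. by rewrite subrr mulr0.
  move=> k _; rewrite xpair_eqE; case: eqP => [->|hk] /=.
    by rewrite hn addrC addKr eqxx.
  by [].
rewrite big1 // => k _; rewrite xpair_eqE; case: eqP => //= ->.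
case: eqP => // e; exfalso; apply: hn; lia.
Qed.


Lemma coefT_dext beta (x : Wvec K) i j :
  coefT (d_ext beta x) (i, j) = coefW x (i + j) * dc beta (i + j) i.
Proof.
rewrite /d_ext coefT_flatten big_map /coefW mulr_suml [RHS]big_mkcond /=.
apply: eq_bigr => p _; rewrite coefT_scale coefT_dbasis.
by case: eqP => [->|]; rewrite ?mulr0 ?mul0r.
Qed.

Lemma coefW_bracket (x y : Wvec K) s :
  coefW (bracket x y) s =
  \sum_(p <- x) \sum_(q <- y)
     (if p.1 + q.1 == s then (p.1 - q.1)%:~R * p.2 * q.2 else 0).
Proof.
rewrite /coefW /bracket big_mkcond /=.
by rewrite (big_allpairs_dep (h := fun p q => (p.1 + q.1, (p.1 - q.1)%:~R * p.2 * q.2))).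
Qed.

Lemma coefT_actT alpha beta (x : Wvec K) (u : Tvec K) i j :
  coefT (actT alpha beta x u) (i, j) =
  \sum_(p <- x) p.2 *
    (- ((i - p.1)%:~R + alpha * p.1%:~R) * coefT u (i - p.1, j)
     - ((j - p.1)%:~R + beta * p.1%:~R) * coefT u (i, j - p.1)).
Proof.
rewrite /actT coefT_flatten.
rewrite (big_allpairs_dep (h := fun p q => [seq (t.1, p.2 * q.2 * t.2) | t <- act_basis alpha beta p.1 q.1])).
apply: eq_bigr => p _.
rewrite /coefT (big_mkcond (fun p0 : (int*int)*K => p0.1 == (i - p.1, j)))
  (big_mkcond (fun p0 : (int*int)*K => p0.1 == (i, j - p.1))) /=.
rewrite !mulr_sumr -sumrB mulr_sumr.
apply: eq_bigr => q _.
rewrite !big_cons big_nil /= addr0.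
case: q => [[a b] c] /=.
rewrite !xpair_eqE.
have E1 : (p.1 + a == i) = (a == i - p.1) by apply/eqP/eqP; lia.
have E2 : (p.1 + b == j) = (b == j - p.1) by apply/eqP/eqP; lia.
rewrite E1 E2.
case: (eqVneq a (i - p.1)) => ha; case: (eqVneq b j) => hb;
case: (eqVneq a i) => ha'; case: (eqVneq b (j - p.1)) => hb' /=;
  rewrite ?ha ?hb ?ha' ?hb' ?mulr0 ?subr0 ?addr0 ?add0r ?sub0r; try ring; rewrite -hb' hb; ring.
Qed.

Lemma point beta (m n i j : int) : m + n = i + j ->
 (m - n)%:~R * dc beta (i + j) i =
 (- ((i - m)%:~R + (1 - beta) * m%:~R) * dc beta (i - m + j) (i - m)
   - ((j - m)%:~R + beta * m%:~R) * dc beta (i + (j - m)) i)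
 - (- ((i - n)%:~R + (1 - beta) * n%:~R) * dc beta (i - n + j) (i - n)
   - ((j - n)%:~R + beta * n%:~R) * dc beta (i + (j - n)) i).
Proof.
move=> e; have -> : j = m + n - i by lia.
have -> : i + (m + n - i) = m + n by ring.
have -> : i - m + (m + n - i) = n by ring.
have -> : i + (m + n - i - m) = n by ring.
have -> : i - n + (m + n - i) = m by ring.
have -> : i + (m + n - i - n) = m by ring.
rewrite /dc.
have -> : i - m - n = i - (m + n) by ring.
have -> : i - n - m = i - (m + n) by ring.
rewrite !(intrD, intrN); ring.
Qed.

Lemma coefW_sum (y : Wvec K) N : coefW y N = \sum_(q <- y) (if q.1 == N then q.2 else 0).
Proof. by rewrite /coefW big_mkcond. Qed.

Definition E beta (i j m : int) : K :=
  - ((i - m)%:~R + (1 - beta) * m%:~R) * dc beta (i - m + j) (i - m)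
   - ((j - m)%:~R + beta * m%:~R) * dc beta (i + (j - m)) i.

Lemma actd_expand beta (x y : Wvec K) i j :
  coefT (actT (1 - beta) beta x (d_ext beta y)) (i, j) =
  \sum_(p <- x) \sum_(q <- y)
     (if p.1 + q.1 == i + j then p.2 * q.2 * E beta i j p.1 else 0).
Proof.
rewrite coefT_actT; apply: eq_bigr => p _.
rewrite !coefT_dext !coefW_sum !mulr_suml !mulr_sumr -sumrB mulr_sumr.
apply: eq_bigr => q _.
have e1 : (q.1 == i - p.1 + j) = (p.1 + q.1 == i + j) by apply/eqP/eqP; lia.
have e2 : (q.1 == i + (j - p.1)) = (p.1 + q.1 == i + j) by apply/eqP/eqP; lia.
rewrite e1 e2 /E; case: ifP => _; last by rewrite !mul0r !mulr0 subrr mulr0.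
ring.
Qed.

Lemma cocycle_id beta (x y : Wvec K) :
  eqT (d_ext beta (bracket x y))
      (subT (actT (1 - beta) beta x (d_ext beta y)) (actT (1 - beta) beta y (d_ext beta x))).
Proof.
case=> i j.
rewrite /subT coefT_cat coefT_scale mulN1r !actd_expand coefT_dext coefW_bracket.
rewrite [X in _ = _ - X]exchange_big /= -sumrB mulr_suml; apply: eq_bigr => p _.
rewrite -sumrB mulr_suml; apply: eq_bigr => q _.
rewrite (addrC q.1); case: ifP => /eqP h; last by rewrite mul0r subrr.
have hp := point beta h.
transitivity (p.2 * q.2 * ((p.1 - q.1)%:~R * dc beta (i + j) i)); first ring.
rewrite hp /E; ring.
Qed.

Lemma dext_linear beta : is_linear_map (d_ext (K:=K) beta).
Proof.
split.
- by move=> x y h [i j]; rewrite !coefT_dext h.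
- by move=> x y ij; rewrite /d_ext /addW map_cat flatten_cat.
- by move=> c x [i j]; rewrite coefT_scale !coefT_dext coefW_scale mulrA.
Qed.

Lemma zero_coef (v : Tvec K) a b :
  (\sum_(t <- v) `|t.1.1|%N < `|a|%N)%N -> coefT v (a, b) = 0.
Proof.
elim: v => [|t v IH] h; first by rewrite /coefT big_nil.
move: h.
rewrite big_cons => h; rewrite /coefT big_cons.
have -> : (t.1 == (a, b)) = false.
  case: t h => [[a' b'] c] /= h; rewrite xpair_eqE.
  case: eqP => // e; exfalso; rewrite e in h; lia.
apply: IH; lia.
Qed.

Lemma not_cob beta : ~ is_coboundary (actT (1 - beta) beta) (d_ext (K:=K) beta).
Proof.
case=> v hv.
set N := (\sum_(t <- v) `|t.1.1|%N)%N.
pose M : int := (N.+1)%:Z.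
pose n : int := 2 * M + 1.
have key : forall i, M <= i -> M <= n - i -> i%:~R - n%:~R * beta = 0.
  move=> i h1 h2.
  have := hv [:: (n, 1)] (i, n - i).
  rewrite coefT_dext coefT_actT big_cons big_nil addr0 /=.
  rewrite !zero_coef; first last.
    rewrite -/N; lia.
    rewrite -/N; lia.
  have -> : i + (n - i) = n by ring.
  rewrite /coefW big_cons eqxx big_nil addr0 /= mul1r /dc /H.
  have -> : (0 <= i) = true by lia.
  have -> : (0 <= i - n) = false by lia.
  by rewrite subr0 mulr1 !mulr0 subrr mulr0.
have k1 := key M ltac:(lia) ltac:(rewrite /n; lia).
have k2 := key (M + 1) ltac:(lia) ltac:(rewrite /n; lia).
have : (1 : K) = 0.
  transitivity (((M + 1)%:~R - n%:~R * beta) - (M%:~R - n%:~R * beta) : K).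
    by rewrite intrD; ring.
  by rewrite k1 k2 subrr.
by move/eqP; rewrite oner_eq0.
Qed.

End Gen.

Theorem propositionP1 (R : realType) (beta : R[i]) :
  is_cocycle (actT (1 - beta) beta) (d_ext beta) /\
  ~ is_coboundary (actT (1 - beta) beta) (d_ext beta).
Proof.
split; last exact: not_cob.
split; first exact: dext_linear.
exact: cocycle_id.
Qed.
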